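(* Every para-Sasakian manifold $(\mathcal M,\psi,\zeta,\tau,g)$ is flat as a bi-Legendrian manifold: the Pang invariants $\Pi_+$ and $\Pi_-$ of the Legendrian foliations tangent to $\mathcal V^+$ and $\mathcal V^-$ both vanish.
   Context: Almost paracontact metric structure $(\psi,\zeta,\tau,g)$: $\psi^2=\mathrm{Id}-\tau\otimes\zeta$, $\tau(\zeta)=1$, $g(\psi X,\psi Y)=-g(X,Y)+\tau(X)\tau(Y)$; $\Psi(X,Y)=g(X,\psi Y)$; $2d\tau(X,Y)=X\tau(Y)-Y\tau(X)-\tau([X,Y])$. Para-Sasakian: $d\tau=\Psi$ and normal, $[\psi,\psi]-2d\tau\otimes\zeta=0$ ($[\psi,\psi]$ the Nijenhuis torsion). $\mathcal V^\pm$ are the $\pm1$-eigendistributions of $\psi$. Pang invariants: $\Pi_\pm(X,Y)=-\tau([[\zeta,X],Y])$ for sections $X,Y$ of $\mathcal V^\pm$. *)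

(* Defs.v *)
From HB Require Import structures.
From mathcomp Require Import all_boot all_order all_algebra.
From mathcomp Require Import all_classical all_reals all_analysis.
Set Implicit Arguments. Unset Strict Implicit. Unset Printing Implicit Defensive.
Import Order.TTheory GRing.Theory Num.Theory.
Import numFieldNormedType.Exports.
Local Open Scope classical_set_scope.
Local Open Scope ring_scope.

(* Local (chart) model of a manifold: an open set U of R^m = 'rV[R]_m.
   Vector fields are maps 'rV_m -> 'rV_m; (1,1)-tensors are matrix fields
   acting on row vectors (v |-> v *m psi x); 1-forms are column-vector fields
   (v |-> (v *m tau x) 0 0); bilinear forms are matrix fields
   ((v,w) |-> (v *m g x *m w^T) 0 0). *)

Fixpoint smooth_k (R : realType) (m : nat) (W : normedModType R)
    (U : set 'rV[R]_m) (k : nat) (f : 'rV[R]_m -> W) : Prop :=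
  match k with
  | 0 => forall x, U x -> {for x, continuous f}
  | k'.+1 => (forall x v, U x -> derivable f x v) /\
             (forall v, smooth_k U k' ('D_v f))
  end.

Definition smooth (R : realType) (m : nat) (W : normedModType R)
    (U : set 'rV[R]_m) (f : 'rV[R]_m -> W) : Prop :=
  forall k, smooth_k U k f.

Definition vder (R : realType) (m : nat) (X : 'rV[R]_m -> 'rV[R]_m)
    (f : 'rV[R]_m -> R) : 'rV[R]_m -> R :=
  fun x => 'D_(X x) f x.

(* Lie bracket [X,Y] = DY.X - DX.Y, so that [X,Y]f = X(Yf) - Y(Xf). *)
Definition lie (R : realType) (m : nat) (X Y : 'rV[R]_m -> 'rV[R]_m)
    : 'rV[R]_m -> 'rV[R]_m :=
  fun x => 'D_(X x) Y x - 'D_(Y x) X x.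

Definition act (R : realType) (m : nat) (psi : 'rV[R]_m -> 'M[R]_m)
    (X : 'rV[R]_m -> 'rV[R]_m) : 'rV[R]_m -> 'rV[R]_m :=
  fun x => X x *m psi x.

Definition form (R : realType) (m : nat) (tau : 'rV[R]_m -> 'cV[R]_m)
    (X : 'rV[R]_m -> 'rV[R]_m) : 'rV[R]_m -> R :=
  fun x => (X x *m tau x) 0 0.

Definition metric (R : realType) (m : nat) (g : 'rV[R]_m -> 'M[R]_m)
    (X Y : 'rV[R]_m -> 'rV[R]_m) : 'rV[R]_m -> R :=
  fun x => (X x *m g x *m (Y x)^T) 0 0.

Definition two_dtau (R : realType) (m : nat) (tau : 'rV[R]_m -> 'cV[R]_m)
    (X Y : 'rV[R]_m -> 'rV[R]_m) : 'rV[R]_m -> R :=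
  fun x => vder X (form tau Y) x - vder Y (form tau X) x
           - form tau (lie X Y) x.

Definition nijenhuis (R : realType) (m : nat) (psi : 'rV[R]_m -> 'M[R]_m)
    (X Y : 'rV[R]_m -> 'rV[R]_m) : 'rV[R]_m -> 'rV[R]_m :=
  fun x => act psi (act psi (lie X Y)) x + lie (act psi X) (act psi Y) x
           - act psi (lie (act psi X) Y) x - act psi (lie X (act psi Y)) x.

Record almost_paracontact_metric (R : realType) (m : nat)
    (U : set 'rV[R]_m) (psi : 'rV[R]_m -> 'M[R]_m)
    (zeta : 'rV[R]_m -> 'rV[R]_m) (tau : 'rV[R]_m -> 'cV[R]_m)
    (g : 'rV[R]_m -> 'M[R]_m) : Prop := {
  apcm_psi_smooth : smooth U psi;
  apcm_zeta_smooth : smooth U zeta;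
  apcm_tau_smooth : smooth U tau;
  apcm_g_smooth : smooth U g;
  apcm_g_sym : forall x, U x -> (g x)^T = g x;
  apcm_g_nondeg : forall x, U x -> g x \in unitmx;
  apcm_psi2 : forall x (v : 'rV[R]_m), U x ->
      v *m psi x *m psi x = v - (v *m tau x) 0 0 *: zeta x;
  apcm_tau_zeta : forall x, U x -> (zeta x *m tau x) 0 0 = 1;
  apcm_compat : forall x (v w : 'rV[R]_m), U x ->
      ((v *m psi x) *m g x *m (w *m psi x)^T) 0 0
      = - (v *m g x *m w^T) 0 0 + (v *m tau x) 0 0 * (w *m tau x) 0 0
}.

Record para_sasakian (R : realType) (m : nat)
    (U : set 'rV[R]_m) (psi : 'rV[R]_m -> 'M[R]_m)
    (zeta : 'rV[R]_m -> 'rV[R]_m) (tau : 'rV[R]_m -> 'cV[R]_m)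
    (g : 'rV[R]_m -> 'M[R]_m) : Prop := {
  ps_apcm : almost_paracontact_metric U psi zeta tau g;
  ps_contact : forall X Y : 'rV[R]_m -> 'rV[R]_m, smooth U X -> smooth U Y ->
      forall x, U x -> two_dtau tau X Y x = 2 * metric g X (act psi Y) x;
  ps_normal : forall X Y : 'rV[R]_m -> 'rV[R]_m, smooth U X -> smooth U Y ->
      forall x, U x -> nijenhuis psi X Y x - two_dtau tau X Y x *: zeta x = 0
}.

Definition pang (R : realType) (m : nat) (zeta : 'rV[R]_m -> 'rV[R]_m)
    (tau : 'rV[R]_m -> 'cV[R]_m) (X Y : 'rV[R]_m -> 'rV[R]_m)
    : 'rV[R]_m -> R :=
  fun x => - form tau (lie (lie zeta X) Y) x.

(* X is a (smooth) section of V^+ (eps = 1) or V^- (eps = -1) on U *)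
Definition section_eig (R : realType) (m : nat) (U : set 'rV[R]_m)
    (psi : 'rV[R]_m -> 'M[R]_m) (eps : R) (X : 'rV[R]_m -> 'rV[R]_m) : Prop :=
  smooth U X /\ forall x, U x -> act psi X x = eps *: X x.

(* Main.v *)
Require Import Defs.
From HB Require Import structures.
From mathcomp Require Import all_boot all_order all_algebra.
From mathcomp Require Import all_classical all_reals all_analysis.
Set Implicit Arguments. Unset Strict Implicit. Unset Printing Implicit Defensive.
Import Order.TTheory GRing.Theory Num.Theory.
Import numFieldNormedType.Exports.
Local Open Scope classical_set_scope.
Local Open Scope ring_scope.

Section A.
Context {R : realType} {V : normedModType R}.

Lemma dir_chain (g : V -> R) (b w : V) (t : R) :
  derivable g (t *: w + b) w ->
  is_derive t 1 (fun s : R => g (s *: w + b)) ('D_w g (t *: w + b)).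
Proof.
have E : (fun h : R => h^-1 *: (((fun s : R => g (s *: w + b)) \o shift t) (h *: 1)
     - g (t *: w + b))) =
  (fun h => h^-1 *: ((g \o shift (t *: w + b)) (h *: w) - g (t *: w + b))).
  apply/funext => h /=; congr (_ *: (g _ - _)).
  by rewrite scalerDl [h *: 1]mulr1 addrA.
move=> dg; split; rewrite /derivable /derive ?E //.
Qed.

Lemma MVT_dir (g : V -> R) (b w : V) (h : R) :
  (forall t, `|t| <= `|h| -> derivable g (t *: w + b) w) ->
  exists c, `|c| <= `|h| /\ g (h *: w + b) - g b = h * 'D_w g (c *: w + b).
Proof.
move=> dg.
have cont : forall t, `|t| <= `|h| -> {for t, continuous (fun s : R => g (s *: w + b))}.
  move=> t /dg /dir_chain [d _].
  by apply: differentiable_continuous; apply/derivable1_diffP.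
have [h0|h0] := leP 0 h.
  have [] := @MVT_segment R (fun s : R => g (s *: w + b))
     (fun s : R => 'D_w g (s *: w + b)) 0 h h0.
  - move=> x; rewrite in_itv /= => /andP[x0 xh]; apply: dir_chain; apply: dg.
    by rewrite (ger0_norm (ltW x0)) (ger0_norm h0) ltW.
  - apply: continuous_in_subspaceT => x; rewrite inE /= in_itv /= => /andP[x0 xh].
    by apply: cont; rewrite !ger0_norm.
  move=> c; rewrite in_itv /= => /andP[c0 ch]; rewrite scale0r add0r subr0 mulrC => E.
  by exists c; split => //; rewrite !ger0_norm.
have [] := @MVT_segment R (fun s : R => g (s *: w + b))
     (fun s : R => 'D_w g (s *: w + b)) h 0 (ltW h0).
- move=> x; rewrite in_itv /= => /andP[hx x0]; apply: dir_chain; apply: dg.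
  by rewrite !ltr0_norm // lerN2 ltW.
- apply: continuous_in_subspaceT => x; rewrite inE /= in_itv /= => /andP[hx x0].
  by apply: cont; rewrite !ler0_norm ?lerN2 // ltW.
move=> c; rewrite in_itv /= => /andP[hc c0]; rewrite scale0r add0r sub0r => E.
exists c; split; first by rewrite !ler0_norm ?lerN2 // ltW.
by rewrite -opprB E mulrN mulrC opprK ?mulNr ?opprK // ; rewrite sub0r mulrN opprK.
Qed.

Lemma D_comb (U : set V) (g G : V -> R) (y v w : V) (c : R) :
  open U -> U y -> (forall z u, U z -> derivable g z u) ->
  (forall z, U z -> 'D_w g z = G z) -> {for y, continuous G} ->
  is_derive y (v + c *: w) g ('D_v g y + c * 'D_w g y).
Proof.
move=> oU Uy dg DG Gc.
pose q1 := fun h : R => h^-1 *: (g ((h * c) *: w + (h *: v + y)) - g (h *: v + y)).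
pose q2 := fun h : R => h^-1 *: ((g \o shift y) (h *: v) - g y).
have Eq : (fun h : R => h^-1 *: ((g \o shift y) (h *: (v + c *: w)) - g y)) = (fun h => q1 h + q2 h).
  apply/funext => h; rewrite /q1 /q2 /= -scalerDr; congr (_ *: _).
  rewrite addrA subrK; congr (g _ - _).
  by rewrite scalerDr scalerA addrA [_ *: w + _]addrC.
have q1c : q1 @ 0^' --> c * G y.
  apply/cvgrPdist_lt => e e0.
  have e1 : 0 < e / (`|c| + 1) by rewrite divr_gt0 // ltr_wpDl.
  have N1 : \forall t \near y, `|G y - G t| < e / (`|c| + 1) by exact: ((cvgrPdist_lt _ _).1 Gc _ e1).
  have N2 : \forall z \near y, U z by apply: open_nbhs_nbhs; split.
  have [r r0 Hr] := (nbhs_ballP _ _).1 (filterI N1 N2).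
  have r1 : 0 < r / (`|v| + `|c| * `|w| + 1).
    by rewrite divr_gt0 // ltr_wpDl // addr_ge0 // mulr_ge0.
  near=> h.
  have hr : `|h| < r / (`|v| + `|c| * `|w| + 1).
    by near: h; apply: dnbhs0_lt.
  have h0 : h != 0 by near: h; exact: nbhs_dnbhs_neq.
  have inb : forall t, `|t| <= `|h * c| -> ball y r (t *: w + (h *: v + y)).
    move=> t ht; rewrite -ball_normE /= addrA opprD addrCA subrr addr0 normrN.
    rewrite (le_lt_trans (ler_normD _ _)) //.
    move: hr; rewrite ltr_pdivlMr; last by rewrite ltr_wpDl // addr_ge0 // mulr_ge0.
    apply: le_lt_trans; rewrite !normrZ.
    apply: (@le_trans _ _ (`|h| * `|c| * `|w| + `|h| * `|v|)).
      by rewrite lerD // ler_wpM2r // -normrM.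
    by rewrite !mulrDr mulr1 mulrA [X in X <= _]addrC lerDl.
  have [c0 [c0h E]] := MVT_dir (g:=g) (b:=h *: v + y) (w:=w) (h:=h * c)
    (fun t ht => dg _ _ (Hr _ (inb t ht)).2).
  rewrite /q1 E scalerA mulrA mulVf // mul1r DG; last exact: (Hr _ (inb _ c0h)).2.
  rewrite -mulrBr normrM.
  apply: (le_lt_trans (ler_wpM2l (normr_ge0 c) (ltW (Hr _ (inb _ c0h)).1))).
  have k0 : `|c| + 1 != 0 by rewrite gt_eqF // ltr_wpDl.
  rewrite -[ltRHS](divfK k0) mulrC.
  by rewrite (ltr_pM2l e1) ltrDl.
have key := cvgD q1c ((dg y v Uy) : q2 @ 0^' --> 'D_v g y).
rewrite (DG y Uy) [_ + c * _]addrC.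
have key' : (fun h : R => h^-1 *: ((g \o shift y) (h *: (v + c *: w)) - g y))
   @ 0^' --> c * G y + 'D_v g y.
  have -> : (fun h : R => h^-1 *: ((g \o shift y) (h *: (v + c *: w)) - g y)) = (q1 + q2).
    by apply/funext => h; exact: (congr1 (fun f => f h) Eq).
  exact: key.
apply: DeriveDef; first by apply/cvg_ex; eexists; exact: key'.
exact: cvg_lim key'.
Unshelve. all: by end_near.
Qed.
End A.

Section B.
Context {R : realType} {m : nat}.
Local Notation V := 'rV[R]_m.

Lemma LINr (U : set V) (g : V -> R) (y : V) :
  open U -> U y -> (forall z u, U z -> derivable g z u) ->
  (forall w, exists G : V -> R,
      (forall z, U z -> 'D_w g z = G z) /\ {for y, continuous G}) ->
  forall v, 'D_v g y = \sum_(i < m) v 0 i * 'D_(delta_mx 0 i) g y.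
Proof.
move=> oU Uy dg HG v; rewrite {1}(row_sum_delta v).
apply: (big_ind2 (fun a b => 'D_a g y = b)).
- exact: derive0.
- move=> a b c d Hab Hcd.
  have [G [DG Gc]] := HG c.
  have := @D_comb R _ U g G y a c 1 oU Uy dg DG Gc.
  rewrite scale1r mul1r => H; rewrite derive_val Hab Hcd //.
- move=> i _.
  have [G [DG Gc]] := HG (delta_mx 0 i).
  have := @D_comb R _ U g G y 0 (delta_mx 0 i) (v 0 i) oU Uy dg DG Gc.
  by rewrite add0r derive0 add0r => H; rewrite derive_val.
Qed.

Lemma LINm p q (U : set V) (f : V -> 'M[R]_(p, q)) (y : V) :
  open U -> U y -> (forall z u, U z -> derivable f z u) ->
  (forall w, {for y, continuous ('D_w f)}) ->
  forall v, 'D_v f y = \sum_(i < m) v 0 i *: 'D_(delta_mx 0 i) f y.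
Proof.
move=> oU Uy df Hc v; apply/matrixP => a b.
rewrite (derive_mx (df _ _ Uy)) mxE summxE.
under eq_bigr do rewrite mxE (derive_mx (df _ _ Uy)) mxE.
apply: (@LINr U (fun z => f z a b) y oU Uy).
  by move=> z u Uz; move/derivable_mxP: (df z u Uz); apply.
move=> w; exists (fun z => 'D_w f z a b); split.
  by move=> z Uz; rewrite (derive_mx (df _ _ Uz)) mxE.
apply: (@continuous_comp _ _ _ (derive f ^~ w) (fun M : 'M[R]_(p, q) => M a b) y (Hc w)); exact: coord_continuous.
Qed.
End B.

Section C.
Context {R : realType} {V : normedModType R} {k : nat}.

Lemma PR (A : V -> 'M[R]_(1, k)) (B : V -> 'M[R]_(k, 1)) x v :
  derivable A x v -> derivable B x v ->
  is_derive x v (fun z => (A z *m B z) 0 0)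
    (('D_v A x *m B x) 0 0 + (A x *m 'D_v B x) 0 0).
Proof.
move=> dA dB.
have dA' i : derivable (fun z => A z 0 i) x v by move/derivable_mxP: dA; apply.
have dB' i : derivable (fun z => B z i 0) x v by move/derivable_mxP: dB; apply.
have E : (fun z => (A z *m B z) 0 0) =
    \sum_(i < k) ((fun z => A z 0 i) * (fun z => B z i 0)).
  by rewrite fct_sumE; apply/funext => z; rewrite mxE.
have dP i : derivable ((fun z => A z 0 i) * (fun z => B z i 0)) x v.
  exact: derivableM.
rewrite E; apply: DeriveDef; first exact: derivable_sum.
rewrite derive_sum // !mxE -big_split /=; apply: eq_bigr => i _.
rewrite deriveM // (derive_mx dA) (derive_mx dB) !mxE /=.
by rewrite addrC; congr (_ + _); exact: mulrC.
Qed.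
End C.

Section Alg.
Context {R : numFieldType} {m : nat}.
Implicit Types (P : 'M[R]_m) (Z v : 'rV[R]_m) (T : 'cV[R]_m).

Lemma scal00 (a : R) (A : 'rV[R]_m) T : ((a *: A) *m T) 0 0 = a * (A *m T) 0 0.
Proof. by rewrite -scalemxAl mxE. Qed.

Lemma alg_zeta P Z T :
  (forall v, v *m P *m P = v - (v *m T) 0 0 *: Z) -> (Z *m T) 0 0 = 1 ->
  Z *m P = 0.
Proof.
move=> H ZT.
have h1 : Z *m P *m P = 0 by rewrite H ZT scale1r subrr.
set c := (Z *m P *m T) 0 0.
have h2 : Z *m P = c *: Z.
  have := H (Z *m P); rewrite h1 mul0mx => /eqP; rewrite eq_sym subr_eq0.
  by move/eqP.
have h3 : c * c = 0.
  have : (Z *m P *m P *m T) 0 0 = 0 by rewrite h1 mul0mx mxE.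
  rewrite h2 -scalemxAl h2 scalerA scal00 ZT mulr1. done.
have c0 : c = 0 by move/eqP: h3; rewrite mulf_eq0 orbb => /eqP.
by rewrite h2 c0 scale0r.
Qed.

Lemma alg_eig P Z T v (e : R) :
  (forall v, v *m P *m P = v - (v *m T) 0 0 *: Z) -> (Z *m T) 0 0 = 1 ->
  e * e = 1 -> v *m P = e *: v -> (v *m T) 0 0 = 0.
Proof.
move=> H ZT ee vP.
have : v *m P *m P = v by rewrite vP -scalemxAl vP scalerA ee scale1r.
rewrite H => /eqP; rewrite subr_eq addrC -subr_eq subrr eq_sym => /eqP h.
move: (congr1 (fun A => (A *m T) 0 0) h) => /=. rewrite scal00 ZT mulr1 mul0mx => ->. by rewrite mxE.
Qed.
End Alg.

Section D.
Context {R : realType} {m : nat}.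
Local Notation V := 'rV[R]_m.

Lemma smooth_cst {W : normedModType R} (U : set V) (a : W) : smooth U (cst a).
Proof.
move=> k; elim: k a => [|k IH] a /=.
  by move=> x _; exact: cst_continuous.
split; first by move=> x v _; exact: derivable_cst.
move=> v; have -> : 'D_v (cst a) = cst (0 : W).
  by apply/funext => z; rewrite derive_cst.
exact: IH.
Qed.

Lemma DSC p q (k : V -> R) (F : V -> 'M[R]_(p, q)) x v :
  derivable k x v -> derivable F x v -> derivable (fun z => k z *: F z) x v.
Proof.
move=> dk dF; apply/derivable_mxP => i j.
have -> : (fun z => (k z *: F z) i j) = k * (fun z => F z i j).
  by apply/funext => z; rewrite mxE.
apply: derivableM => //; by move/derivable_mxP: dF; apply.
Qed.

Lemma HOM p q (U : set V) (f : V -> 'M[R]_(p, q)) (y : V) (e : R) v :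
  open U -> U y -> (forall z u, U z -> derivable f z u) ->
  (forall w, {for y, continuous ('D_w f)}) ->
  'D_(e *: v) f y = e *: 'D_v f y.
Proof.
move=> oU Uy df Hc.
rewrite !(LINm oU Uy df Hc) scaler_sumr; apply: eq_bigr => i _.
by rewrite mxE scalerA.
Qed.
End D.

Lemma pang0 (R : realType) m (U : set 'rV[R]_m) psi zeta tau g (eps : R) :
  eps * eps = 1 -> open U -> para_sasakian U psi zeta tau g ->
  forall X Y, section_eig U psi eps X -> section_eig U psi eps Y ->
  forall x, U x -> pang zeta tau X Y x = 0.
Proof.
move=> ee oU [ap contact normal] X Y [sX eX] [sY eY] x Ux.
case: ap => spsi szeta stau sg gsym gnd psi2 tz compat.
have NU : forall z, U z -> \forall y \near z, U y.
  by move=> z Uz; apply: open_nbhs_nbhs; split.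
have dX : forall z u, U z -> derivable X z u := (sX 1%N).1.
have dY : forall z u, U z -> derivable Y z u := (sY 1%N).1.
have dZ : forall z u, U z -> derivable zeta z u := (szeta 1%N).1.
have dT : forall z u, U z -> derivable tau z u := (stau 1%N).1.
have cX : forall z, U z -> forall w, {for z, continuous ('D_w X)}.
  by move=> z Uz w; exact: ((sX 1%N).2 w z Uz).
have cZ : forall z, U z -> forall w, {for z, continuous ('D_w zeta)}.
  by move=> z Uz w; exact: ((szeta 1%N).2 w z Uz).
have zpsi : forall z, U z -> zeta z *m psi z = 0.
  by move=> z Uz; apply: (alg_zeta (fun v => psi2 z v Uz) (tz z Uz)).
have tX : forall z, U z -> (X z *m tau z) 0 0 = 0.
  by move=> z Uz; apply: (alg_eig (fun v => psi2 z v Uz) (tz z Uz) ee (eX z Uz)).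
have tY : forall z, U z -> (Y z *m tau z) 0 0 = 0.
  by move=> z Uz; apply: (alg_eig (fun v => psi2 z v Uz) (tz z Uz) ee (eY z Uz)).
have gzX : forall z, U z -> (zeta z *m g z *m (X z)^T) 0 0 = 0.
  move=> z Uz; have := compat z (zeta z) (X z) Uz.
  rewrite zpsi // !mul0mx tz // mul1r tX // addr0 => /eqP.
  by rewrite [X in X == _]mxE eq_sym oppr_eq0 => /eqP.
pose W := lie zeta X.
have L1 : forall F z, U z -> lie (act psi zeta) F z = 0.
  move=> F z Uz; rewrite /lie /act zpsi // derive0 sub0r.
  rewrite (@near_eq_derive _ _ _ _ (cst 0)) ?derive_cst ?oppr0 //.
  by apply: filterS (NU z Uz) => y Uy; rewrite zpsi.
have L2 : forall z, U z -> lie zeta (act psi X) z = eps *: W z.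
  move=> z Uz; rewrite /lie /W /lie.
  rewrite (@near_eq_derive _ _ _ _ (eps \*: X)); last first.
    by apply: filterS (NU z Uz) => y Uy /=; rewrite eX.
  rewrite deriveZ ?dX //.
  rewrite eX // (HOM _ _ oU Uz (dZ) (cZ z Uz)).
  by rewrite scalerBr.
  exact: dX.
have TDz : forall z, U z -> two_dtau tau zeta X z = 0.
  move=> z Uz; rewrite contact // /metric eX // linearZ /= -scalemxAr mxE gzX //.
  by rewrite mulr0 mulr0.
have T1 : forall z, U z -> (W z *m tau z) 0 0 = 0.
  move=> z Uz; have := TDz z Uz; rewrite /two_dtau /vder.
  rewrite (@near_eq_derive _ _ _ _ (cst 0) z (zeta z)); last first.
    by apply: filterS (NU z Uz) => y Uy; rewrite /Defs.form /= tX.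
  rewrite (@near_eq_derive _ _ _ _ (cst (1 : R)) z (X z)); last first.
    by apply: filterS (NU z Uz) => y Uy; rewrite /Defs.form /= tz.
  rewrite !derive_cst subrr sub0r /Defs.form => /eqP; rewrite oppr_eq0 => /eqP.
  done.
have T2 : W x *m psi x = eps *: W x.
  have E0 : act psi (act psi W) x = W x *m psi x *m psi x by [].
  have E1 : act psi (lie (act psi zeta) X) x = 0.
    by change ((lie (act psi zeta) X x) *m psi x = 0); rewrite L1 // mul0mx.
  have E3 : act psi (lie zeta (act psi X)) x = (eps *: W x) *m psi x.
    by change (lie zeta (act psi X) x *m psi x = (eps *: W x) *m psi x); rewrite L2.
  have := normal zeta X szeta sX x Ux.
  rewrite TDz // scale0r subr0 /nijenhuis E0 E1 E3 (L1 _ x Ux) subr0 addr0.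
  rewrite psi2 // T1 // scale0r subr0 => /eqP; rewrite subr_eq0 => /eqP H.
  by rewrite {2}H -scalemxAl scalerA ee scale1r.
have sc00 : forall (a : R) (M : 'M[R]_1), (a *: M) 0 0 = a * M 0 0.
  by move=> a M; rewrite mxE.
have T3 : (W x *m g x *m (Y x)^T) 0 0 = 0.
  have := compat x (W x) (Y x) Ux.
  have eY' : Y x *m psi x = eps *: Y x := eY x Ux.
  rewrite T2 eY' T1 // mul0r addr0 linearZ /= -scalemxAl -scalemxAr !sc00.
  rewrite -scalemxAl sc00 mulrA ee mul1r => /eqP; rewrite -addr_eq0 -mulr2n mulrn_eq0 /=.
  by move/eqP.
have dW : derivable W x (Y x).
  have LX : forall z, U z ->
      'D_(zeta z) X z = \sum_(i < m) zeta z 0 i *: 'D_(delta_mx 0 i) X z.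
    by move=> z Uz; exact: (LINm oU Uz dX (cX z Uz)).
  have LZ : forall z, U z ->
      'D_(X z) zeta z = \sum_(i < m) X z 0 i *: 'D_(delta_mx 0 i) zeta z.
    by move=> z Uz; exact: (LINm oU Uz dZ (cZ z Uz)).
  pose h1 := fun i : 'I_m => (fun z => zeta z 0 i *: 'D_(delta_mx 0 i) X z).
  pose h2 := fun i : 'I_m => (fun z => X z 0 i *: 'D_(delta_mx 0 i) zeta z).
  apply: (@near_eq_derivable _ _ _ ((\sum_(i < m) h1 i) - (\sum_(i < m) h2 i)) W).
    apply: filterS (NU x Ux) => z Uz /=.
    rewrite /W /lie LX // LZ // !fct_sumE.
    by [].
  apply: derivableB; apply: derivable_sum => i; apply: DSC.
  - by move/derivable_mxP: (dZ x (Y x) Ux); apply.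
  - exact: ((sX 2%N).2 (delta_mx 0 i)).1 x (Y x) Ux.
  - by move/derivable_mxP: (dX x (Y x) Ux); apply.
  - exact: ((szeta 2%N).2 (delta_mx 0 i)).1 x (Y x) Ux.
have D1 : ('D_(W x) Y x *m tau x) 0 0 + (Y x *m 'D_(W x) tau x) 0 0 = 0.
  case: (PR (dY x (W x) Ux) (dT x (W x) Ux)) => _ <-.
  rewrite (@near_eq_derive _ _ _ _ (cst 0) x (W x)) ?derive_cst //.
  by apply: filterS (NU x Ux) => z Uz /=; exact: tY.
have D2 : ('D_(Y x) W x *m tau x) 0 0 + (W x *m 'D_(Y x) tau x) 0 0 = 0.
  case: (PR dW (dT x (Y x) Ux)) => _ <-.
  rewrite (@near_eq_derive _ _ _ _ (cst 0) x (Y x)) ?derive_cst //.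
  by apply: filterS (NU x Ux) => z Uz /=; exact: T1.
have C := contact (cst (W x)) (cst (Y x)) (smooth_cst U (W x)) (smooth_cst U (Y x)) x Ux.
have Ea : 'D_(W x) (Defs.form tau (cst (Y x))) x = (Y x *m 'D_(W x) tau x) 0 0.
  have [_ ->] := PR (derivable_cst (Y x) x (W x)) (dT x (W x) Ux).
  by rewrite derive_cst mul0mx mxE add0r.
have Eb : 'D_(Y x) (Defs.form tau (cst (W x))) x = (W x *m 'D_(Y x) tau x) 0 0.
  have [_ ->] := PR (derivable_cst (W x) x (Y x)) (dT x (Y x) Ux).
  by rewrite derive_cst mul0mx mxE add0r.
have E0 : Defs.form tau (lie (cst (W x)) (cst (Y x))) x = 0.
  by rewrite /Defs.form /lie !derive_cst subrr mul0mx mxE.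
have eY' : Y x *m psi x = eps *: Y x := eY x Ux.
rewrite /two_dtau /vder Ea Eb E0 subr0 /metric /act /= eY' linearZ /= -scalemxAr sc00 T3 mulr0 mulr0 in C.
have sb00 : forall (A B : 'M[R]_1), (A - B) 0 0 = A 0 0 - B 0 0.
  by move=> A B; rewrite !mxE.
rewrite /pang /Defs.form /lie mulmxBl sb00.
move/eqP: D1; rewrite addr_eq0 => /eqP ->.
move/eqP: D2; rewrite addr_eq0 => /eqP ->.
by rewrite opprK addrC opprB C.
Qed.

Unset Implicit Arguments.
Unset Strict Implicit.

Theorem corollary4p6 (R : realType) (n : nat) (U : set 'rV[R]_(n.*2.+1))
    (psi : 'rV[R]_(n.*2.+1) -> 'M[R]_(n.*2.+1))
    (zeta : 'rV[R]_(n.*2.+1) -> 'rV[R]_(n.*2.+1))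
    (tau : 'rV[R]_(n.*2.+1) -> 'cV[R]_(n.*2.+1))
    (g : 'rV[R]_(n.*2.+1) -> 'M[R]_(n.*2.+1)) :
  open U -> para_sasakian U psi zeta tau g ->
  (forall X Y, section_eig U psi 1 X -> section_eig U psi 1 Y ->
     forall x, U x -> pang zeta tau X Y x = 0) /\
  (forall X Y, section_eig U psi (-1) X -> section_eig U psi (-1) Y ->
     forall x, U x -> pang zeta tau X Y x = 0).
Proof.
move=> oU PS; split.
  by move=> X Y sX sY x Ux; apply: (@pang0 R _ U psi zeta tau g 1 (mulr1 1) oU PS X Y sX sY x Ux).
have e : (-1 : R) * -1 = 1 by rewrite mulrNN mulr1.
by move=> X Y sX sY x Ux; apply: (@pang0 R _ U psi zeta tau g (-1) e oU PS X Y sX sY x Ux).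
Qed.
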